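(* Let $n\ge1$ be a natural number, let $a,b,\alpha,\beta$ be variables (with $\beta a-\alpha b\neq0$), and write $\Psi_r(n)=\Psi\left(\begin{array}{cc|c} a & b & n \\ \alpha & \beta & r \end{array}\right)$, $\Phi_r(n)=\Phi\left(\begin{array}{cc|c} a & b & n \\ \alpha & \beta & r \end{array}\right)$. Let $D=\alpha\frac{\partial}{\partial a}+\beta\frac{\partial}{\partial b}$ (so $\alpha,\beta$ are held constant). Then \[ \Psi_r(n)=-\frac{1}{r}\,D\,\Psi_{r-1}(n)\quad\text{for }1\le r\le\lfloor n/2\rfloor,\qquad \Phi_r(n)=-\frac{1}{r}\,D\,\Phi_{r-1}(n)\quad\text{for }1\le r\le\lfloor (n-1)/2\rfloor. \]
   Context: $\delta(m)=1$ for $m$ odd, $0$ for $m$ even; $\lfloor\cdot\rfloor$ is the floor. For indeterminates $a,b,\alpha,\beta$ and $n\ge1$, $\Psi\left(\begin{array}{cc|c} a & b & n \\ \alpha & \beta & r \end{array}\right)$ ($0\le r\le\lfloor n/2\rfloor$) and $\Phi\left(\begin{array}{cc|c} a & b & n \\ \alpha & \beta & r \end{array}\right)$ ($0\le r\le\lfloor (n-1)/2\rfloor$) are the unique polynomials in $\mathbb{Z}[a,b,\alpha,\beta]$ such that, identically in $x,y$, $(\beta a-\alpha b)^{\lfloor n/2\rfloor}\frac{x^n+y^n}{(x+y)^{\delta(n)}}=\sum_{r}\Psi\left(\begin{array}{cc|c} a & b & n \\ \alpha & \beta & r \end{array}\right)(\alpha x^2+\beta xy+\alpha y^2)^{\lfloor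 n/2\rfloor-r}(ax^2+bxy+ay^2)^r$ and $(\beta a-\alpha b)^{\lfloor (n-1)/2\rfloor}\frac{x^n-y^n}{(x-y)(x+y)^{\delta(n-1)}}=\sum_{r}\Phi\left(\begin{array}{cc|c} a & b & n \\ \alpha & \beta & r \end{array}\right)(\alpha x^2+\beta xy+\alpha y^2)^{\lfloor (n-1)/2\rfloor-r}(ax^2+bxy+ay^2)^r$. *)

(* Defs.v *)
From HB Require Import structures.
From mathcomp Require Import all_boot all_order all_algebra.
From mathcomp Require Import mpoly.
Set Implicit Arguments. Unset Strict Implicit. Unset Printing Implicit Defensive.
Import GRing.Theory.
Local Open Scope ring_scope.

Definition ia : 'I_4 := @Ordinal 4 0 isT.
Definition ib : 'I_4 := @Ordinal 4 1 isT.
Definition ialpha : 'I_4 := @Ordinal 4 2 isT.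
Definition ibeta : 'I_4 := @Ordinal 4 3 isT.

Section Vars.
Variable R : comRingType.
Definition pa : {mpoly R[4]} := 'X_ia.
Definition pb : {mpoly R[4]} := 'X_ib.
Definition palpha : {mpoly R[4]} := 'X_ialpha.
Definition pbeta : {mpoly R[4]} := 'X_ibeta.

Definition Dop (p : {mpoly R[4]}) : {mpoly R[4]} :=
  palpha * mderiv ia p + pbeta * mderiv ib p.
End Vars.

Definition ix : 'I_2 := @Ordinal 2 0 isT.
Definition iy : 'I_2 := @Ordinal 2 1 isT.
Notation ZP := {mpoly int[4]}.
Notation XY := {mpoly ZP[2]}.
Definition px : XY := 'X_ix.
Definition py : XY := 'X_iy.

Definition delta (m : nat) : nat := odd m.

Definition Qalpha : XY :=
  (palpha int)%:MP * px ^+ 2 + (pbeta int)%:MP * (px * py) + (palpha int)%:MP * py ^+ 2.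
Definition Qa : XY :=
  (pa int)%:MP * px ^+ 2 + (pb int)%:MP * (px * py) + (pa int)%:MP * py ^+ 2.

Definition det_ab : ZP := pbeta int * pa int - palpha int * pb int.

(* Defining identity of Psi(a b n / alpha beta r), 0 <= r <= n/2, with the
   division by (x+y)^delta(n) cleared. *)
Definition IsPsi (n : nat) (Psi : nat -> ZP) : Prop :=
  (det_ab ^+ (n./2))%:MP * (px ^+ n + py ^+ n) =
  (px + py) ^+ delta n *
    \sum_(r < (n./2).+1) (Psi r)%:MP * Qalpha ^+ (n./2 - r) * Qa ^+ r.

(* Defining identity of Phi(a b n / alpha beta r), 0 <= r <= (n-1)/2, with
   the division by (x-y)(x+y)^delta(n-1) cleared. *)
Definition IsPhi (n : nat) (Phi : nat -> ZP) : Prop :=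
  (det_ab ^+ ((n.-1)./2))%:MP * (px ^+ n - py ^+ n) =
  (px - py) * (px + py) ^+ delta n.-1 *
    \sum_(r < ((n.-1)./2).+1) (Phi r)%:MP * Qalpha ^+ ((n.-1)./2 - r) * Qa ^+ r.

Definition toQ (p : ZP) : {mpoly rat[4]} := map_mpoly (fun z : int => z%:~R) p.

(* Main.v *)
Require Import Defs.
From HB Require Import structures.
From mathcomp Require Import all_boot all_order all_algebra.
From mathcomp Require Import mpoly.
From mathcomp Require Import ring.
Import GRing.Theory.
Local Open Scope ring_scope.

Section DopLemmas.
Variable R : comRingType.
Implicit Types p q : {mpoly R[4]}.

Lemma Dop0 : Dop (0 : {mpoly R[4]}) = 0.
Proof. by rewrite /Dop !mderiv0 !mulr0 addr0. Qed.
Lemma DopD p q : Dop (p + q) = Dop p + Dop q.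
Proof. rewrite /Dop !mderivD; ring. Qed.
Lemma DopN p : Dop (- p) = - Dop p.
Proof. rewrite /Dop !mderivN; ring. Qed.
Lemma DopM p q : Dop (p * q) = Dop p * q + p * Dop q.
Proof. rewrite /Dop !mderivM; ring. Qed.
Lemma DopC (c : R) : Dop (c%:MP : {mpoly R[4]}) = 0.
Proof. by rewrite /Dop !mderivC !mulr0 addr0. Qed.
Lemma Dop1 : Dop (1 : {mpoly R[4]}) = 0.
Proof. exact: DopC. Qed.
Lemma DopXn p m : Dop (p ^+ m) = p ^+ m.-1 * Dop p *+ m.
Proof.
elim: m => [|m IH]; first by rewrite expr0 Dop1 mulr0n.
rewrite exprS DopM IH; case: m {IH} => [|m] /=.
  rewrite !expr0 mulr0n; ring.
rewrite !mulrS !exprS; ring.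
Qed.
Lemma Dop_sum I (r : seq I) (P : pred I) (F : I -> {mpoly R[4]}) :
  Dop (\sum_(i <- r | P i) F i) = \sum_(i <- r | P i) Dop (F i).
Proof. exact: (big_morph (@Dop R) DopD Dop0). Qed.

Lemma mderivXU (i j : 'I_4) : mderiv i ('X_j : {mpoly R[4]}) = (i == j)%:R.
Proof.
rewrite mderivX mnm1E eq_sym; case: eqP => [->|ne].
  have mm : forall m : 'X_{1..4}, (m - m = 0)%MM.
    by move=> m; apply/mnmP => l; rewrite mnmBE mnm0E subnn.
  by rewrite mm mpolyX0 scale1r.
by rewrite scale0r.
Qed.
Lemma Dopa : Dop (pa R) = palpha R.
Proof. by rewrite /Dop /pa !mderivXU /= mulr1 mulr0 addr0. Qed.
Lemma Dopb : Dop (pb R) = pbeta R.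
Proof. by rewrite /Dop /pb !mderivXU /= mulr1 mulr0 add0r. Qed.
Lemma Dopalpha : Dop (palpha R) = 0.
Proof. by rewrite /Dop /palpha !mderivXU /= !mulr0 addr0. Qed.
Lemma Dopbeta : Dop (pbeta R) = 0.
Proof. by rewrite /Dop /pbeta !mderivXU /= !mulr0 addr0. Qed.
End DopLemmas.

Section Abstract.
Variable A : idomainType.
Variable d : A -> A.
Hypothesis dD : forall x y, d (x + y) = d x + d y.
Hypothesis dM : forall x y, d (x * y) = d x * y + x * d y.
Local Notation P := {poly A}.
Implicit Types p q : P.

Lemma d0 : d 0 = 0.
Proof. have h := dD 0 0; rewrite addr0 in h; apply: (addrI (d 0)); by rewrite -h addr0. Qed.
Lemma d1 : d 1 = 0.
Proof. have h := dM 1 1; rewrite !mulr1 mul1r in h; apply: (addrI (d 1)); by rewrite -h addr0. Qed.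
Lemma dN x : d (- x) = - d x.
Proof. by apply/eqP; rewrite -subr_eq0 opprK -dD addNr d0. Qed.
Lemma d_sum I (r : seq I) (Q : pred I) (F : I -> A) :
  d (\sum_(i <- r | Q i) F i) = \sum_(i <- r | Q i) d (F i).
Proof. exact: (big_morph d dD d0). Qed.

Definition Dp (p : P) : P := map_poly d p.
Lemma coefDp p i : (Dp p)`_i = d p`_i.
Proof. by rewrite coef_map_id0 // d0. Qed.
Lemma DpD p q : Dp (p + q) = Dp p + Dp q.
Proof. by apply/polyP => i; rewrite coefD !coefDp coefD dD. Qed.
Lemma Dp0 : Dp 0 = 0.
Proof. by apply/polyP => i; rewrite coefDp !coef0 d0. Qed.
Lemma DpN p : Dp (- p) = - Dp p.
Proof. by apply/polyP => i; rewrite coefN !coefDp coefN dN. Qed.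
Lemma DpM p q : Dp (p * q) = Dp p * q + p * Dp q.
Proof.
apply/polyP => i; rewrite coefDp coefD !coefM d_sum -big_split /=.
by apply: eq_bigr => j _; rewrite dM !coefDp.
Qed.
Lemma DpC c : Dp c%:P = (d c)%:P.
Proof. by apply/polyP => i; rewrite coefDp !coefC; case: eqP => _ //; rewrite d0. Qed.
Lemma DpX : Dp 'X = 0.
Proof. by apply/polyP => i; rewrite coefDp coefX coef0; case: eqP => _; rewrite ?d1 ?d0. Qed.
Lemma Dp1 : Dp 1 = 0.
Proof. by rewrite DpC d1. Qed.
Lemma DpXn p m : Dp (p ^+ m) = p ^+ m.-1 * Dp p *+ m.
Proof.
elim: m => [|m IH]; first by rewrite expr0 Dp1 mulr0n.
rewrite exprS DpM IH; case: m {IH} => [|m] /=.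
  rewrite !expr0 mulr0n; ring.
rewrite !mulrS !exprS; ring.
Qed.
Lemma Dp_sum I (r : seq I) (Q : pred I) (F : I -> P) :
  Dp (\sum_(i <- r | Q i) F i) = \sum_(i <- r | Q i) Dp (F i).
Proof. exact: (big_morph Dp DpD Dp0). Qed.


Variables a b al be : A.
Hypothesis da : d a = al.
Hypothesis db : d b = be.
Hypothesis dal : d al = 0.
Hypothesis dbe : d be = 0.
Hypothesis a_neq0 : a != 0.
Hypothesis D_neq0 : be * a - al * b != 0.

Definition Up : P := al%:P * 'X^2 + be%:P * 'X + al%:P.
Definition Vp : P := a%:P * 'X^2 + b%:P * 'X + a%:P.

Lemma DpU : Dp Up = 0.
Proof. rewrite /Up !DpD !DpM !DpC ?DpXn !DpX dal dbe; ring. Qed.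
Lemma DpV : Dp Vp = Up.
Proof. rewrite /Vp /Up !DpD !DpM !DpC ?DpXn !DpX da db; ring. Qed.

Lemma aU : a%:P * Up = (be * a - al * b)%:P * 'X + Vp * al%:P.
Proof. rewrite /Up /Vp polyCB !polyCM; ring. Qed.

Lemma size_Vp : size Vp = 3.
Proof.
rewrite /Vp -addrA size_addl size_Cmul ?size_polyXn //.
rewrite size_MXaddC; case: ifP => _ //.
by rewrite !ltnS size_polyC_leq1.
Qed.

Lemma Vp_neq0 : Vp != 0.
Proof. by rewrite -size_poly_eq0 size_Vp. Qed.

Lemma coef0Vp : Vp`_0 = a.
Proof. by rewrite /Vp !coefD !coefCM coefXn coefX coefC /= !mulr0 !add0r. Qed.

Lemma Vdiv m : forall W C, Vp * W = C%:P * 'X^m -> C = 0.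
Proof.
elim: m => [|m IH] W C.
  rewrite expr0 mulr1 => h.
  have [W0|Wn0] := eqVneq W 0.
    by move: h; rewrite W0 mulr0 => /esym/eqP; rewrite polyC_eq0 => /eqP.
  have := size_mul Vp_neq0 Wn0; rewrite h size_Vp.
  have := size_polyC_leq1 C; have := size_poly_gt0 W; rewrite Wn0.
  by case: (size W) => // sW _; case: (size C%:P) => [|[|]].
move=> h.
have c0 : W`_0 = 0.
  have := congr1 (fun p => p`_0) h; rewrite /= coef0M coefCM coefXn /= mulr0 coef0Vp.
  by move/eqP; rewrite mulf_eq0 (negbTE a_neq0) /= => /eqP.
have eW : W = drop_poly 1 W * 'X.
  rewrite -{1}(poly_take_drop 1 W) expr1.
  have -> : take_poly 1 W = 0.
    by apply/polyP => i; rewrite coef_take_poly coef0; case: i => //.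
  by rewrite add0r.
apply: (IH (drop_poly 1 W)).
apply: (@mulIf _ 'X); first by rewrite polyX_eq0.
by rewrite -mulrA -eW h exprSr mulrA.
Qed.

Lemma powmod (x y z : P) m : exists M, (x + z * y) ^+ m = x ^+ m + z * M.
Proof.
elim: m => [|m [M hM]]; first by exists 0; rewrite !expr0 mulr0 addr0.
exists (x * M + y * x ^+ m + y * z * M).
by rewrite exprS hM exprS; ring.
Qed.

Lemma indep k : forall c : nat -> A,
  \sum_(r < k.+1) (c r)%:P * Up ^+ (k - r) * Vp ^+ r = 0 ->
  forall r, (r <= k)%N -> c r = 0.
Proof.
elim: k => [|k IH] c h r hr.
  move: hr; rewrite leqn0 => /eqP ->.
  move: h; rewrite big_ord1 /= subnn !expr0 !mulr1 => /eqP.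
  by rewrite polyC_eq0 => /eqP.
pose c' := fun i => c i.+1.
pose S' := \sum_(i < k.+1) (c' i)%:P * Up ^+ (k - i) * Vp ^+ i.
have eS : \sum_(i < k.+1) (c (lift ord0 i))%:P * Up ^+ (k.+1 - lift ord0 i) * Vp ^+ (lift ord0 i)
     = Vp * S'.
  rewrite /S' mulr_sumr; apply: eq_bigr => i _.
  by rewrite lift0 subSS exprS /c'; ring.
rewrite big_ord_recl /= subn0 expr0 mulr1 eS in h.
have hS : Vp * S' + (c 0%N)%:P * Up ^+ k.+1 = 0 by rewrite addrC.
have [M hM] := powmod ((be * a - al * b)%:P * 'X) al%:P Vp k.+1.
rewrite -aU in hM.
have c00 : c 0 = 0.
  have := @Vdiv k.+1 (- (a%:P) ^+ k.+1 * S' - (c 0%N)%:P * M) (c 0 * (be * a - al * b) ^+ k.+1).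
  have -> : (c 0 * (be * a - al * b) ^+ k.+1)%:P * 'X^(k.+1)
      = (c 0%N)%:P * ((be * a - al * b)%:P * 'X) ^+ k.+1.
    by rewrite polyCM rmorphXn exprMn mulrA.
  have -> : ((be * a - al * b)%:P * 'X) ^+ k.+1 = (a%:P * Up) ^+ k.+1 - Vp * M.
    by rewrite hM addrK.
  move=> H.
  have e : Vp * (- (a%:P) ^+ k.+1 * S' - (c 0%N)%:P * M) -
       (c 0%N)%:P * ((a%:P * Up) ^+ k.+1 - Vp * M) =
       - (a%:P) ^+ k.+1 * (Vp * S' + (c 0%N)%:P * Up ^+ k.+1).
    rewrite exprMn; clear -S'; clearbody S'; ring.
  rewrite hS mulr0 in e.
  have := H (subr0_eq e).
  move/eqP; rewrite mulf_eq0 expf_eq0 (negbTE D_neq0) andbF orbF => /eqP //.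
case: r hr => [|r] hr; first exact: c00.
have hS' : S' = 0.
  move: hS; rewrite c00 mul0r addr0 => /eqP; rewrite mulf_eq0 (negbTE Vp_neq0) /=.
  by move/eqP.
exact: (IH c' hS' r hr).
Qed.

Lemma key k (c : nat -> A) (E L : P) : E != 0 -> Dp E = 0 -> Dp L = 0 ->
  L = E * \sum_(r < k.+1) (c r)%:P * Up ^+ (k - r) * Vp ^+ r ->
  forall r, (r < k)%N -> (r.+1)%:R * c r.+1 = - d (c r).
Proof.
move=> En0 DE DL eL.
set S := \sum_(r < k.+1) _ in eL.
have DS : Dp S = 0.
  move: DL; rewrite eL DpM DE mul0r add0r => /eqP.
  by rewrite mulf_eq0 (negbTE En0) /= => /eqP.
pose e := fun r => d (c r) + (if (r < k)%N then (r.+1)%:R * c r.+1 else 0).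
have eDS : Dp S = \sum_(r < k.+1) (e r)%:P * Up ^+ (k - r) * Vp ^+ r.
  rewrite /S Dp_sum.
  under eq_bigr => r _ do rewrite !DpM DpC !DpXn DpU DpV !mulr0 mul0rn mulr0 addr0.
  rewrite big_split /=.
  under [in RHS]eq_bigr => r _ do rewrite /e polyCD !mulrDl.
  rewrite [in RHS]big_split /=; congr (_ + _).
  rewrite big_ord_recl /= mulr0n mulr0 add0r.
  rewrite big_ord_recr /= ltnn mul0r mul0r addr0.
  apply: eq_bigr => i _.
  rewrite /bump leq0n add1n add0n ltn_ord -(subnSK (ltn_ord i)) exprS polyCM rmorph_nat /=.
  ring.
have he : forall r, (r <= k)%N -> e r = 0 by apply: indep; rewrite -eDS.
move=> r hr; have := he r (ltnW hr); rewrite /e hr => /eqP.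
by rewrite addrC addr_eq0 => /eqP.
Qed.
End Abstract.

Definition ev (p : XY) : {poly ZP} :=
  mmap (@polyC ZP) (fun i : 'I_2 => if i == ix then 'X else 1) p.

Lemma evM p q : ev (p * q) = ev p * ev q.
Proof. exact: rmorphM. Qed.
Lemma evD p q : ev (p + q) = ev p + ev q.
Proof. exact: rmorphD. Qed.
Lemma evB p q : ev (p - q) = ev p - ev q.
Proof. exact: rmorphB. Qed.
Lemma evX p m : ev (p ^+ m) = ev p ^+ m.
Proof. exact: rmorphXn. Qed.
Lemma evC c : ev c%:MP = c%:P.
Proof. exact: mmapC. Qed.
Lemma ev_sum I (r : seq I) (Q : pred I) (F : I -> XY) :
  ev (\sum_(i <- r | Q i) F i) = \sum_(i <- r | Q i) ev (F i).
Proof. exact: rmorph_sum. Qed.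
Lemma evx : ev px = 'X.
Proof. by rewrite /ev /px mmapX mmap1U. Qed.
Lemma evy : ev py = 1.
Proof. by rewrite /ev /py mmapX mmap1U. Qed.

Lemma toQ_mderiv i p : toQ (mderiv i p) = mderiv i (toQ p).
Proof.
elim/mpolyind: p => [|c m p _ _ IH]; first by rewrite /toQ !raddf0.
rewrite mderivD /toQ !raddfD /= -!/(toQ _) IH; congr (_ + _).
rewrite mderivZ mderivX scalerA /toQ !map_mpolyZ !map_mpolyX mderivZ mderivX scalerA.
by rewrite rmorphM rmorph_nat.
Qed.

Lemma toQ_Dop p : toQ (Dop p) = Dop (toQ p).
Proof.
rewrite /Dop /toQ raddfD /= !rmorphM /= -!/(toQ _) !toQ_mderiv.
by rewrite /palpha /pbeta /toQ !map_mpolyX.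
Qed.

Lemma pa_neq0 : pa int != 0.
Proof.
apply/negP => /eqP H.
have := congr1 (meval (fun i : 'I_4 => 1 : int)) H.
by rewrite /pa mevalXU meval0.
Qed.

Lemma det_neq0 : det_ab != 0.
Proof.
apply/negP => /eqP H.
have := congr1 (meval (fun i : 'I_4 => ((i == ia) || (i == ibeta))%:R : int)) H.
by rewrite /det_ab mevalB !mevalM /pa /pb /palpha /pbeta !mevalXU meval0.
Qed.

Lemma Dop_det : Dop det_ab = 0.
Proof. rewrite /det_ab DopD DopN !DopM Dopa Dopb Dopalpha Dopbeta; ring. Qed.

Lemma evQgen (u w : ZP) (X Y : XY) : ev (u%:MP * X ^+ 2 + w%:MP * (X * Y) + u%:MP * Y ^+ 2)
  = u%:P * ev X ^+ 2 + w%:P * (ev X * ev Y) + u%:P * ev Y ^+ 2.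
Proof. by rewrite !evD (evM _ (X ^+ 2)) (evM _ (X * Y)) (evM _ (Y ^+ 2)) !evC !evX evM. Qed.

Lemma evQalpha : ev Qalpha = Up _ (palpha int) (pbeta int).
Proof. rewrite /Qalpha evQgen evx evy /Up; ring. Qed.
Lemma evQa : ev Qa = Vp _ (pa int) (pb int).
Proof. rewrite /Qa evQgen evx evy /Vp; ring. Qed.

Lemma ev_S k (c : nat -> ZP) (U V : XY) :
  ev (\sum_(r < k.+1) (c r)%:MP * U ^+ (k - r) * V ^+ r) =
  \sum_(r < k.+1) (c r)%:P * ev U ^+ (k - r) * ev V ^+ r.
Proof.
rewrite ev_sum; apply: eq_bigr => r _.
by rewrite (evM ((c r)%:MP * U ^+ (k - r)) (V ^+ r)) (evM (c r)%:MP (U ^+ (k - r))) (evC (c r)) (evX U (k - r)) (evX V r).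
Qed.

Definition DpZ := Dp ZP (@Dop int).

Lemma conc k (c : nat -> ZP) (E L : {poly ZP}) : E != 0 -> DpZ E = 0 -> DpZ L = 0 ->
  L = E * \sum_(r < k.+1) (c r)%:P * ev Qalpha ^+ (k - r) * ev Qa ^+ r ->
  forall r, (r < k)%N -> (r.+1)%:R * c r.+1 = - Dop (c r).
Proof.
move=> En0 DE DL; have := evQalpha; have := evQa.
generalize (ev Qalpha) (ev Qa) => U0 V0 -> -> eL r hr.
exact: (@key _ _ (@DopD int) (@DopM int) _ _ _ _ (Dopa _) (Dopb _) (Dopalpha _) (Dopbeta _)
   pa_neq0 det_neq0 _ _ _ _ En0 DE DL eL _ hr).
Qed.

Lemma toQN p : toQ (- p) = - toQ p.
Proof. exact: raddfN. Qed.
Lemma toQnat m : toQ m%:R = m%:R.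
Proof. exact: rmorph_nat. Qed.
Lemma toQM' p q : toQ (p * q) = toQ p * toQ q.
Proof. exact: rmorphM. Qed.

Lemma finalQ (c : nat -> ZP) r : (1 <= r)%N ->
  (r.-1.+1)%:R * c r.-1.+1 = - Dop (c r.-1) ->
  toQ (c r) = - (r%:R : rat)^-1 *: Dop (toQ (c r.-1)).
Proof.
case: r => // r _ /= h.
have h' : Dop (c r) = - ((r.+1)%:R * c r.+1) by rewrite h opprK.
rewrite -toQ_Dop h' toQN toQM' toQnat scaleNr scalerN opprK mulr_natl -scaler_nat scalerA.
by rewrite mulVf ?scale1r // Num.Theory.pnatr_eq0.
Qed.

Lemma DpZ_XE b (m : nat) : Dop b = 0 -> DpZ (('X + b%:P) ^+ m) = 0 /\ ('X + b%:P) ^+ m != 0.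
Proof.
move=> db; split.
  rewrite /DpZ (DpXn _ _ (@DopD int) (@DopM int)) (DpD _ _ (@DopD int)) (DpX _ _ (@DopD int) (@DopM int)).
  by rewrite (DpC _ _ (@DopD int)) db add0r mulr0 mul0rn.
by rewrite expf_neq0 // -size_poly_eq0 size_XaddC.
Qed.

Lemma evPsi (C : ZP) (X Y U V : XY) n j k (c : nat -> ZP) :
  C%:MP * (X ^+ n + Y ^+ n) = (X + Y) ^+ j * \sum_(r < k.+1) (c r)%:MP * U ^+ (k - r) * V ^+ r ->
  C%:P * (ev X ^+ n + ev Y ^+ n) = (ev X + ev Y) ^+ j * \sum_(r < k.+1) (c r)%:P * ev U ^+ (k - r) * ev V ^+ r.
Proof.
move/(congr1 ev).
by rewrite (evM C%:MP) evC (evD (X ^+ n)) (evX X n) (evX Y n) (evM ((X + Y) ^+ j)) (evX (X + Y) j) (evD X Y) ev_S.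
Qed.

Lemma evPhi (C : ZP) (X Y U V : XY) n j k (c : nat -> ZP) :
  C%:MP * (X ^+ n - Y ^+ n) = (X - Y) * (X + Y) ^+ j * \sum_(r < k.+1) (c r)%:MP * U ^+ (k - r) * V ^+ r ->
  C%:P * (ev X ^+ n - ev Y ^+ n) = (ev X - ev Y) * (ev X + ev Y) ^+ j * \sum_(r < k.+1) (c r)%:P * ev U ^+ (k - r) * ev V ^+ r.
Proof.
move/(congr1 ev).
rewrite (evM C%:MP) evC (evB (X ^+ n)) (evX X n) (evX Y n) (evM ((X - Y) * (X + Y) ^+ j)).
by rewrite (evM (X - Y)) (evB X Y) (evX (X + Y) j) (evD X Y) ev_S.
Qed.

Arguments evPsi {C X Y U V n j k c}.
Arguments evPhi {C X Y U V n j k c}.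
Arguments conc {k c E L}.

Lemma DpZ_XB B (m : nat) : DpZ B = 0 -> DpZ (('X + B) ^+ m) = 0.
Proof.
move=> dB.
rewrite /DpZ (DpXn _ _ (@DopD int) (@DopM int)) (DpD _ _ (@DopD int)) (DpX _ _ (@DopD int) (@DopM int)).
by rewrite -/DpZ dB add0r mulr0 mul0rn.
Qed.

Lemma DpZ1 : DpZ 1 = 0.
Proof. exact: (Dp1 _ _ (@DopD int) (@DopM int)). Qed.
Lemma DpZN1 : DpZ (- 1) = 0.
Proof. by rewrite /DpZ (DpN _ _ (@DopD int)) -/DpZ DpZ1 oppr0. Qed.

Lemma DpZ_L k n (s : {poly ZP}) : DpZ s = 0 ->
  DpZ ((det_ab ^+ k)%:P * ('X ^+ n + s)) = 0.
Proof.
move=> ds.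
rewrite /DpZ (DpM _ _ (@DopD int) (@DopM int)) (DpC _ _ (@DopD int)) DopXn Dop_det mulr0 mul0rn.
rewrite (DpD _ _ (@DopD int)) (DpXn _ _ (@DopD int) (@DopM int)) (DpX _ _ (@DopD int) (@DopM int)).
by rewrite -/DpZ ds mulr0 mul0rn add0r mul0r add0r mulr0.
Qed.

Lemma XB_neq0 (b : ZP) m : ('X + b%:P) ^+ m != 0.
Proof. by rewrite expf_neq0 // -size_poly_eq0 size_XaddC. Qed.

Theorem theorem8p1 (n : nat) : (1 <= n)%N ->
  (forall Psi : nat -> {mpoly int[4]}, IsPsi n Psi ->
     forall r : nat, (1 <= r <= n./2)%N ->
       toQ (Psi r) = - (r%:R : rat)^-1 *: Dop (toQ (Psi r.-1))) /\
  (forall Phi : nat -> {mpoly int[4]}, IsPhi n Phi ->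
     forall r : nat, (1 <= r <= (n.-1)./2)%N ->
       toQ (Phi r) = - (r%:R : rat)^-1 *: Dop (toQ (Phi r.-1))).
Proof.
move=> _; split.
  move=> Psi H r /andP[h1 h2].
  apply: finalQ => //.
  have := evPsi H; have := evx; have := evy.
  generalize (ev px) (ev py) => X0 Y0 -> -> eL.
  apply: (conc _ _ _ eL); last by case: r h1 h2.
  - by rewrite -polyC1 XB_neq0.
  - by apply: DpZ_XB; exact: DpZ1.
  - by rewrite expr1n; apply: DpZ_L; exact: DpZ1.
move=> Phi H r /andP[h1 h2].
apply: finalQ => //.
have := evPhi H; have := evx; have := evy.
generalize (ev px) (ev py) => X0 Y0 -> -> eL.
apply: (conc _ _ _ eL); last by case: r h1 h2.
- rewrite mulf_neq0 //; last by rewrite -polyC1 XB_neq0.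
  by rewrite -polyC1 -polyCN -size_poly_eq0 size_XaddC.
- rewrite /DpZ (DpM _ _ (@DopD int) (@DopM int)) -/DpZ.
  rewrite (DpZ_XB _ _ DpZ1) mulr0 addr0.
  have := DpZ_XB (-1) 1 DpZN1; rewrite expr1 => ->; by rewrite mul0r.
- by rewrite expr1n; apply: DpZ_L; exact: DpZN1.
Qed.
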